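(* Let $G$ be a locally compact abelian group acting continuously on a compact metric space $(X,d)$. Then complete proximality $\sim_{cp}$ is an equivalence relation on $X$.
   Context: Let $\mathcal A$ be the collection of subsets $A\subset G$ which contain a translate of every compact subset of $G$. Points $x,y\in X$ are proximal in $A$ if $\inf_{t\in A}d(t\cdot x,t\cdot y)=0$, and completely proximal, $x\sim_{cp}y$, if they are proximal in every $A\in\mathcal A$. *)

(* Defs.v *)
From Stdlib Require Import Reals Lra List Relation_Definitions.
Open Scope R_scope.

Set Implicit Arguments.

Record topology (T : Type) := Topology {
  is_open : (T -> Prop) -> Prop;
  open_full : is_open (fun _ => True);
  open_inter : forall U V, is_open U -> is_open V ->
                 is_open (fun x => U x /\ V x);
  open_union : forall (I : Type) (F : I -> T -> Prop),
                 (forall i, is_open (F i)) -> is_open (fun x => exists i, F i x)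
}.

Definition compact_set {T : Type} (tT : topology T) (K : T -> Prop) : Prop :=
  forall (I : Type) (F : I -> T -> Prop),
    (forall i, is_open tT (F i)) ->
    (forall x, K x -> exists i, F i x) ->
    exists l : list I, forall x, K x -> exists i, In i l /\ F i x.

Definition hausdorff {T : Type} (tT : topology T) : Prop :=
  forall x y : T, x <> y -> exists U V, is_open tT U /\ is_open tT V /\
    U x /\ V y /\ (forall z, U z -> V z -> False).

Definition locally_compact {T : Type} (tT : topology T) : Prop :=
  forall x : T, exists U K, is_open tT U /\ U x /\ compact_set tT K /\
    (forall z, U z -> K z).

Definition prod_open {A B : Type} (tA : topology A) (tB : topology B)
  (W : A * B -> Prop) : Prop :=
  forall p, W p -> exists U V, is_open tA U /\ is_open tB V /\
    U (fst p) /\ V (snd p) /\ (forall a b, U a -> V b -> W (a, b)).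

Definition continuous {A B : Type} (tA : topology A) (tB : topology B)
  (f : A -> B) : Prop :=
  forall U, is_open tB U -> is_open tA (fun a => U (f a)).

Definition continuous2 {A B C : Type} (tA : topology A) (tB : topology B)
  (tC : topology C) (f : A -> B -> C) : Prop :=
  forall U, is_open tC U -> prod_open tA tB (fun p => U (f (fst p) (snd p))).

Definition is_LCA_group {G : Type} (tG : topology G)
  (mul : G -> G -> G) (inv : G -> G) (e : G) : Prop :=
  (forall a b c, mul a (mul b c) = mul (mul a b) c) /\
  (forall a, mul e a = a) /\
  (forall a, mul (inv a) a = e) /\
  (forall a b, mul a b = mul b a) /\
  continuous2 tG tG tG mul /\
  continuous tG tG inv /\
  hausdorff tG /\
  locally_compact tG.

Definition is_metric {X : Type} (d : X -> X -> R) : Prop :=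
  (forall x y, 0 <= d x y) /\
  (forall x y, d x y = 0 <-> x = y) /\
  (forall x y, d x y = d y x) /\
  (forall x y z, d x z <= d x y + d y z).

Definition metric_open {X : Type} (d : X -> X -> R) (U : X -> Prop) : Prop :=
  forall x, U x -> exists eps, 0 < eps /\ forall y, d x y < eps -> U y.

Lemma metric_open_full {X : Type} (d : X -> X -> R) :
  metric_open d (fun _ => True).
Proof. intros x _; exists 1; split; [lra | auto]. Qed.

Lemma metric_open_inter {X : Type} (d : X -> X -> R) U V :
  metric_open d U -> metric_open d V -> metric_open d (fun x => U x /\ V x).
Proof.
  intros HU HV x [Ux Vx].
  destruct (HU x Ux) as [e1 [He1 H1]]; destruct (HV x Vx) as [e2 [He2 H2]].
  exists (Rmin e1 e2); split; [apply Rmin_pos; auto|].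
  intros y Hy; split; [apply H1 | apply H2];
  eapply Rlt_le_trans; eauto; [apply Rmin_l | apply Rmin_r].
Qed.

Lemma metric_open_union {X : Type} (d : X -> X -> R) (I : Type)
  (F : I -> X -> Prop) :
  (forall i, metric_open d (F i)) -> metric_open d (fun x => exists i, F i x).
Proof.
  intros HF x [i Hi]; destruct (HF i x Hi) as [e [He H]].
  exists e; split; auto; intros y Hy; exists i; auto.
Qed.

Definition metric_topology {X : Type} (d : X -> X -> R) : topology X :=
  Topology (metric_open d) (metric_open_full d) (@metric_open_inter X d)
           (@metric_open_union X d).

Definition is_compact_metric_space {X : Type} (d : X -> X -> R) : Prop :=
  is_metric d /\ compact_set (metric_topology d) (fun _ => True).

Definition is_continuous_action {G X : Type} (tG : topology G)
  (mul : G -> G -> G) (e : G) (d : X -> X -> R) (act : G -> X -> X) : Prop :=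
  (forall x, act e x = x) /\
  (forall g h x, act (mul g h) x = act g (act h x)) /\
  continuous2 tG (metric_topology d) (metric_topology d) act.

Definition contains_translates {G : Type} (tG : topology G)
  (mul : G -> G -> G) (A : G -> Prop) : Prop :=
  forall K, compact_set tG K -> exists t, forall k, K k -> A (mul t k).

(** inf_{t in A} d(t.x, t.y) = 0 (d is nonnegative, so this says that
    d(t.x,t.y) gets arbitrarily small for t in A). *)
Definition proximal_in {G X : Type} (d : X -> X -> R) (act : G -> X -> X)
  (A : G -> Prop) (x y : X) : Prop :=
  forall eps, 0 < eps -> exists t, A t /\ d (act t x) (act t y) < eps.

Definition completely_proximal {G X : Type} (tG : topology G)
  (mul : G -> G -> G) (d : X -> X -> R) (act : G -> X -> X) (x y : X) : Prop :=
  forall A, contains_translates tG mul A -> proximal_in d act A x y.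

(* Main.v *)
Require Import Defs.
From Stdlib Require Import Reals Relation_Definitions Lra List.
Open Scope R_scope.

Fixpoint inter {A I : Type} (U : I -> A -> Prop) (l : list I) (x : A) : Prop :=
  match l with nil => True | j :: l' => U j x /\ inter U l' x end.

Lemma inter_open (A : Type) (tA : topology A) (I : Type) (U : I -> A -> Prop) :
  (forall i, is_open tA (U i)) -> forall l, is_open tA (fun x => inter U l x).
Proof.
  intros HU l; induction l as [|a l IH]; simpl.
  - exact (open_full tA).
  - exact (open_inter tA (U a) (fun x => inter U l x) (HU a) IH).
Qed.

Lemma inter_In (A I : Type) (U : I -> A -> Prop) (l : list I) (x : A) :
  inter U l x -> forall j, In j l -> U j x.
Proof.
  induction l as [|a l IH]; simpl; [tauto|].
  intros [H1 H2] j [->|Hj]; auto.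
Qed.

Lemma inter_all (A I : Type) (U : I -> A -> Prop) (l : list I) (x : A) :
  (forall j, In j l -> U j x) -> inter U l x.
Proof.
  induction l as [|a l IH]; simpl; auto.
Qed.

Lemma tube (A B : Type) (tA : topology A) (tB : topology B) (K : A -> Prop)
  (L : B -> Prop) (I : Type) (U : I -> A -> Prop) (V : I -> B -> Prop) :
  compact_set tA K -> compact_set tB L ->
  (forall i, is_open tA (U i)) -> (forall i, is_open tB (V i)) ->
  (forall a b, K a -> L b -> exists i, U i a /\ V i b) ->
  exists l : list I, forall a b, K a -> L b -> exists i, In i l /\ U i a /\ V i b.
Proof.
  intros HK HL HU HV Hc.
  pose (T := {a : A & {l : list {i : I | U i a} |
               forall b, L b -> exists j, In j l /\ V (proj1_sig j) b}}).
  pose (W := fun (t : T) (x : A) =>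
    inter (fun (j : {i : I | U i (projT1 t)}) => U (proj1_sig j)) (proj1_sig (projT2 t)) x).
  destruct (HK T W) as [lt Hlt].
  - intro t. unfold W. apply inter_open. intros; apply HU.
  - intros a Ka.
    destruct (HL {i : I | U i a} (fun j => V (proj1_sig j))) as [l Hl].
    + intros; apply HV.
    + intros b Lb. destruct (Hc a b Ka Lb) as [i [Ui Vi]].
      exists (exist _ i Ui). exact Vi.
    + exists (existT _ a (exist _ l Hl)). unfold W; simpl.
      apply inter_all. intros j _. exact (proj2_sig j).
  - exists (flat_map (fun t : T => map (fun j => proj1_sig j) (proj1_sig (projT2 t))) lt).
    intros a b Ka Lb. destruct (Hlt a Ka) as [t [Int Wt]].
    destruct (proj2_sig (projT2 t) b Lb) as [j [Inj Vj]].
    exists (proj1_sig j). split; [|split; auto].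
    + apply in_flat_map. exists t. split; auto.
      apply (in_map (fun j => proj1_sig j)); auto.
    + exact (inter_In _ _ _ _ _ Wt j Inj).
Qed.

Lemma image_compact (A B C : Type) (tA : topology A) (tB : topology B)
  (tC : topology C) (f : A -> B -> C) (K : A -> Prop) (L : B -> Prop) :
  continuous2 tA tB tC f -> compact_set tA K -> compact_set tB L ->
  compact_set tC (fun c => exists a b, K a /\ L b /\ c = f a b).
Proof.
  intros Hf HK HL I F HF Hc.
  pose (J := {p : (A -> Prop) * (B -> Prop) * I | is_open tA (fst (fst p)) /\
     is_open tB (snd (fst p)) /\
     forall a b, fst (fst p) a -> snd (fst p) b -> F (snd p) (f a b)}).
  destruct (tube _ _ tA tB K L _ (fun j : J => fst (fst (proj1_sig j)))
             (fun j : J => snd (fst (proj1_sig j))) HK HL) as [l Hl].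
  - intro j. exact (proj1 (proj2_sig j)).
  - intro j. exact (proj1 (proj2 (proj2_sig j))).
  - intros a b Ka Lb.
    destruct (Hc (f a b) (ex_intro _ a (ex_intro _ b (conj Ka (conj Lb eq_refl)))))
      as [i Hi].
    destruct (Hf (F i) (HF i) (a, b) Hi) as [U [V [HU [HV [Ua [Vb HUV]]]]]].
    exists (exist _ (U, V, i) (conj HU (conj HV HUV))). simpl. auto.
  - exists (map (fun j : J => snd (proj1_sig j)) l).
    intros c [a [b [Ka [Lb ->]]]].
    destruct (Hl a b Ka Lb) as [j [Inj [Ua Vb]]].
    exists (snd (proj1_sig j)). split.
    + apply (in_map (fun j : J => snd (proj1_sig j))); auto.
    + exact (proj2 (proj2 (proj2_sig j)) a b Ua Vb).
Qed.

Lemma ball_open (X : Type) (d : X -> X -> R) (Hd : is_metric d) (u : X) (r : R) :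
  metric_open d (fun w => d u w < r).
Proof.
  destruct Hd as [H0 [H1 [H2 H3]]].
  intros w Hw. exists (r - d u w). split; [lra|].
  intros y Hy. pose proof (H3 u w y). lra.
Qed.

Fixpoint minlist {J : Type} (r : J -> R) (l : list J) : R :=
  match l with nil => 1 | j :: l' => Rmin (r j) (minlist r l') end.

Lemma minlist_pos (J : Type) (r : J -> R) (l : list J) :
  (forall j, 0 < r j) -> 0 < minlist r l.
Proof.
  intros H; induction l; simpl; [lra|]. apply Rmin_pos; auto.
Qed.

Lemma minlist_le (J : Type) (r : J -> R) (l : list J) :
  forall j, In j l -> minlist r l <= r j.
Proof.
  induction l as [|a l IH]; simpl; [tauto|].
  intros j [->|Hj]. apply Rmin_l. eapply Rle_trans; [apply Rmin_r|]; auto.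
Qed.

Lemma equicont (G X : Type) (tG : topology G) (d : X -> X -> R)
  (HX : is_compact_metric_space d) (act : G -> X -> X)
  (Hc : continuous2 tG (metric_topology d) (metric_topology d) act)
  (L : G -> Prop) (HL : compact_set tG L) (eps : R) (Heps : 0 < eps) :
  exists delta, 0 < delta /\ forall l u v, L l -> d u v < delta ->
    d (act l u) (act l v) < eps.
Proof.
  destruct HX as [Hd HXc].
  pose proof Hd as [H0 [H1 [H2 H3]]].
  pose (J := {p : (G -> Prop) * X * R * G | is_open tG (fst (fst (fst p))) /\
     0 < snd (fst p) /\
     forall a w, fst (fst (fst p)) a -> d (snd (fst (fst p))) w < snd (fst p) ->
       d (act (snd p) (snd (fst (fst p)))) (act a w) < eps / 2}).
  destruct (tube _ _ tG (metric_topology d) L (fun _ => True) _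
             (fun j : J => fst (fst (fst (proj1_sig j))))
             (fun j : J => fun w => d (snd (fst (fst (proj1_sig j)))) w
                                     < snd (fst (proj1_sig j)) / 2) HL HXc)
    as [lj Hlj].
  - intro j. exact (proj1 (proj2_sig j)).
  - intro j. apply ball_open; auto.
  - intros l u Ll _.
    destruct (Hc (fun z => d (act l u) z < eps / 2) (ball_open _ _ Hd _ _) (l, u))
      as [U [V [HU [HV [Ul [Vu HUV]]]]]].
    { simpl. rewrite (proj2 (H1 _ _) eq_refl). lra. }
    destruct (HV u Vu) as [r [Hr HrV]].
    exists (exist _ (U, u, r, l) (conj HU (conj Hr
      (fun a w Ua Hw => HUV a w Ua (HrV w Hw))))).
    simpl. split; auto. rewrite (proj2 (H1 _ _) eq_refl). lra.
  - exists (minlist (fun j : J => snd (fst (proj1_sig j)) / 2) lj). split.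
    + apply minlist_pos. intro j. pose proof (proj1 (proj2 (proj2_sig j))). lra.
    + intros l u v Ll Huv.
      destruct (Hlj l u Ll I) as [j [Inj [Ul Hu]]].
      pose proof (minlist_le _ (fun j : J => snd (fst (proj1_sig j)) / 2) lj j Inj)
        as Hm. simpl in Hm, Hu.
      destruct (proj2_sig j) as [_ [Hr Hj]].
      set (u0 := snd (fst (fst (proj1_sig j)))) in *.
      set (r := snd (fst (proj1_sig j))) in *.
      set (l0 := snd (proj1_sig j)) in *.
      assert (E1 := Hj l u Ul ltac:(lra)).
      assert (E2 := Hj l v Ul ltac:(pose proof (H3 u0 u v); lra)).
      pose proof (H3 (act l u) (act l0 u0) (act l v)).
      rewrite (H2 (act l u) (act l0 u0)) in H. lra.
Qed.

Lemma singleton_compact (G : Type) (tG : topology G) (e : G) :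
  compact_set tG (fun g => g = e).
Proof.
  intros I F _ Hc. destruct (Hc e eq_refl) as [i Hi].
  exists (i :: nil). intros x ->. exists i. simpl; auto.
Qed.

Theorem mainTheorem17
  (G : Type) (tG : topology G) (mul : G -> G -> G) (inv : G -> G) (e : G)
  (HG : is_LCA_group tG mul inv e)
  (X : Type) (d : X -> X -> R) (HX : is_compact_metric_space d)
  (act : G -> X -> X) (Hact : is_continuous_action tG mul e d act) :
  equivalence X (completely_proximal tG mul d act).
Proof.
  destruct HG as [Hassoc [_ [_ [Hcomm [Hmulc _]]]]].
  destruct Hact as [_ [Hactm Hactc]].
  pose proof HX as [[H0 [H1 [H2 H3]]] _].
  assert (Key : forall x y, completely_proximal tG mul d act x y ->
    forall A, contains_translates tG mul A -> forall eps, 0 < eps ->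
    contains_translates tG mul (fun t => A t /\ d (act t x) (act t y) < eps)).
  { intros x y Hxy A HA eps Heps L HL.
    destruct (equicont _ _ tG d HX act Hactc L HL eps Heps) as [delta [Hdel Hdl]].
    pose (S := fun s => forall l, L l -> A (mul s l)).
    assert (HS : contains_translates tG mul S).
    { intros M HM.
      destruct (HA _ (image_compact _ _ _ tG tG tG mul M L Hmulc HM HL)) as [t Ht].
      exists t. intros m Mm l Ll. rewrite <- Hassoc. apply Ht.
      exists m, l. auto. }
    destruct (Hxy S HS delta Hdel) as [s [Ss Hs]].
    exists s. intros l Ll. split; auto.
    rewrite Hcomm, !Hactm. apply Hdl; auto. }
  constructor.
  - intros x A HA eps Heps.
    destruct (HA _ (singleton_compact _ tG e)) as [t Ht].
    exists (mul t e). split; auto. rewrite (proj2 (H1 _ _) eq_refl). auto.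
  - intros x y z Hxy Hyz A HA eps Heps.
    destruct (Hyz _ (Key x y Hxy A HA (eps/2) ltac:(lra)) (eps/2) ltac:(lra))
      as [t [[At Ht1] Ht2]].
    exists t. split; auto. pose proof (H3 (act t x) (act t y) (act t z)). lra.
  - intros x y Hxy A HA eps Heps.
    destruct (Hxy A HA eps Heps) as [t [At Ht]].
    exists t. rewrite H2. auto.
Qed.
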